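(* There is an absolute constant $C$ such that the following holds. Let $\delta\in(0,1/2)$ and let $\boldsymbol\theta_1,\boldsymbol\theta_2\in\mathbb R^d$ satisfy $\|\boldsymbol\theta_1-\boldsymbol\theta_2\|_2^2\ge C\sigma^2\log\delta^{-1}$. Let $\hat{\boldsymbol\theta}_1,\hat{\boldsymbol\theta}_2\in\mathbb R^d$ satisfy $\|\hat{\boldsymbol\theta}_b-\boldsymbol\theta_b\|_2\le\sigma$ for $b\in\{1,2\}$, and let $\hat{\mathbf c}=(\hat{\boldsymbol\theta}_1+\hat{\boldsymbol\theta}_2)/2$. Then if $\mathbf x\sim\mathcal N(\boldsymbol\theta_1,\sigma^2\mathbf I_d)$, with probability at least $1-\delta$ we have $(\mathbf x-\hat{\mathbf c})\cdot(\hat{\boldsymbol\theta}_1-\hat{\mathbf c})>0$; and if $\mathbf x\sim\mathcal N(\boldsymbol\theta_2,\sigma^2\mathbf I_d)$, with probability at least $1-\delta$ we have $(\mathbf x-\hat{\mathbf c})\cdot(\hat{\boldsymbol\theta}_1-\hat{\mathbf c})<0$. *)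

(* Defs.v *)
From HB Require Import structures.
From mathcomp Require Import all_boot all_order all_algebra.
From mathcomp Require Import all_classical all_reals all_analysis.
Set Implicit Arguments. Unset Strict Implicit. Unset Printing Implicit Defensive.
Import Order.TTheory GRing.Theory Num.Theory.
Local Open Scope classical_set_scope.
Local Open Scope ring_scope.

Definition dotv {R : realType} {d : nat} (u v : 'rV[R]_d) : R :=
  \sum_(i < d) u 0 i * v 0 i.

Definition norm2 {R : realType} {d : nat} (u : 'rV[R]_d) : R :=
  Num.sqrt (dotv u u).

Definition rvec {R : realType} {dT} {T : measurableType dT} {d : nat}
  (X : 'I_d -> T -> R) (w : T) : 'rV[R]_d := \row_(i < d) X i w.

(* Mutual independence of a finite family of real random variables:
   product rule for every choice of Borel sets (taking B_i = setT recovers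
   every subfamily). *)
Definition mutually_independent {R : realType} {dT} {T : measurableType dT}
  (P : probability T R) {d : nat} (X : 'I_d -> T -> R) : Prop :=
  forall B : 'I_d -> set R, (forall i, measurable (B i)) ->
    P (\bigcap_(i in [set: 'I_d]) (X i @^-1` B i)) =
    (\prod_(i < d) P (X i @^-1` B i))%E.

Definition gaussian_vector {R : realType} {dT} {T : measurableType dT}
  (P : probability T R) {d : nat} (X : 'I_d -> T -> R)
  (theta : 'rV[R]_d) (sigma : R) : Prop :=
  (forall i, measurable_fun [set: T] (X i)) /\
  mutually_independent P X /\
  (forall i (A : set R), measurable A ->
     P (X i @^-1` A) = normal_prob (theta 0 i) sigma A).

(* Main.v *)
Require Import Defs.
Set Warnings "-all".
From HB Require Import structures.
From mathcomp Require Import all_boot all_order all_algebra.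
From mathcomp Require Import all_classical all_reals all_analysis.
From mathcomp Require Import measurable_realfun.
From mathcomp Require Import ring lra.
Import Order.TTheory GRing.Theory Num.Theory.
Local Open Scope classical_set_scope.
Local Open Scope ring_scope.

Section gen.
Context (R : realType).
Local Open Scope ereal_scope.
Import HBNNSimple.

Lemma gen_side {dA} (A : measurableType dA) (m : {measure set A -> \bar R})
  (Y G : A -> R) (mY : measurable_fun setT Y) (mG : measurable_fun setT G)
  (G0 : forall x, (0 <= G x)%R)
  (phi : R -> R) (mphi : measurable_fun [set: R] (EFin \o phi : R -> \bar R))
  (phi0 : forall x, (0 <= phi x)%R) :
  \int[m]_x (phi (Y x) * G x)%:E =
  limn (fun n => \sum_(r \in range (nnsfun_approx measurableT mphi n))
     r%:E * \int[m]_x (\1_(nnsfun_approx measurableT mphi n @^-1` [set r]) (Y x) * G x)%:E).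
Proof.
set f_ := nnsfun_approx measurableT mphi.
transitivity (limn (fun n => \int[m]_x (f_ n (Y x) * G x)%:E)).
  rewrite -monotone_convergence//.
  - apply: eq_integral => x _; apply/esym/cvg_lim => //.
    rewrite EFinM.
    under eq_fun do rewrite EFinM.
    apply: cvgeM; first by [].
      have := @cvg_nnsfun_approx _ _ _ setT measurableT (EFin \o phi) mphi
        (fun y _ => phi0 y) (Y x) Logic.I.
      exact.
    exact: cvg_cst.
  - move=> n; apply/measurable_EFinP; apply: measurable_funM => //.
    exact: measurableT_comp.
  - by move=> n x _; rewrite lee_fin mulr_ge0.
  - move=> x _ a b ab; rewrite lee_fin ler_wpM2r//.
    exact/lefP/nd_nnsfun_approx.
congr (limn _); apply/funext => n.
have mfr r : measurable (f_ n @^-1` [set r]).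
  by rewrite -(setTI (_ @^-1` _)); exact: measurable_funP.
transitivity (\int[m]_x (\sum_(r \in range (f_ n))
     (r * (\1_(f_ n @^-1` [set r]) (Y x) * G x))%:E)).
  apply: eq_integral => x _.
  rewrite fsumEFin//; congr EFin.
  rewrite fimfunE fsbig_finite//= fsbig_finite//= mulr_suml.
  by apply: eq_bigr => r _; rewrite mulrA.
rewrite ge0_integral_fsum//; last first.
  move=> r x _. rewrite lee_fin.
  have [r0|r0] := leP 0%R r.
    by rewrite !mulr_ge0.
  by rewrite preimage_nnfun0// indic0 mul0r mulr0.
  move=> r; apply/measurable_EFinP; apply: measurable_funM => //.
  apply: measurable_funM => //.
  apply: measurableT_comp => //. 
apply: eq_fsbigr => r; rewrite inE => -[y _ <-].
under eq_integral do rewrite EFinM.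
rewrite ge0_integralZl_EFin//.
- by move=> x _; rewrite lee_fin mulr_ge0.
- apply/measurable_EFinP; apply: measurable_funM => //.
  apply: measurableT_comp => //.
Qed.

Lemma gen_eq {dA} (A : measurableType dA) (m1 : {measure set A -> \bar R})
  (Y1 G1 : A -> R) (mY1 : measurable_fun setT Y1) (mG1 : measurable_fun setT G1)
  (G10 : forall x, (0 <= G1 x)%R)
  {dB} (B : measurableType dB) (m2 : {measure set B -> \bar R})
  (Y2 G2 : B -> R) (mY2 : measurable_fun setT Y2) (mG2 : measurable_fun setT G2)
  (G20 : forall x, (0 <= G2 x)%R) :
  (forall S : set R, measurable S ->
     \int[m1]_x (\1_S (Y1 x) * G1 x)%:E = \int[m2]_x (\1_S (Y2 x) * G2 x)%:E) ->
  forall (phi : R -> R), measurable_fun [set: R] phi -> (forall x, (0 <= phi x)%R) ->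
  \int[m1]_x (phi (Y1 x) * G1 x)%:E = \int[m2]_x (phi (Y2 x) * G2 x)%:E.
Proof.
move=> H phi mphi phi0.
have mphi' : measurable_fun [set: R] (EFin \o phi : R -> \bar R).
  exact/measurable_EFinP.
rewrite (@gen_side _ A m1 Y1 G1 mY1 mG1 G10 phi mphi' phi0) (@gen_side _ B m2 Y2 G2 mY2 mG2 G20 phi mphi' phi0).
congr (limn _); apply/funext => n; apply: eq_fsbigr => r _.
rewrite H//.
Qed.

End gen.

Section mgf.
Context (R : realType).

Lemma normal_shift (mu s t c x : R) : s != 0 ->
  expR (t * (x - c)) * normal_pdf mu s x =
  expR (t * (mu - c) + t ^+ 2 * s ^+ 2 / 2) * normal_pdf (mu + t * s ^+ 2) s x.
Proof.
move=> s0; rewrite !normal_pdfE// /normal_fun.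
rewrite mulrCA -expRD [RHS]mulrCA -expRD.
congr (_ * expR _).
have s20 : s ^+ 2 != 0 by rewrite expf_neq0.
by field.
Qed.

Lemma gauss_mgf (mu s t c : R) : s != 0 ->
  (\int[lebesgue_measure]_x (expR (t * (x - c)) * normal_pdf mu s x)%:E =
   (expR (t * (mu - c) + t ^+ 2 * s ^+ 2 / 2))%:E)%E.
Proof.
move=> s0.
under eq_integral do rewrite normal_shift// EFinM.
rewrite ge0_integralZl_EFin//.
- by rewrite integral_normal_pdf mule1.
- by move=> x _; rewrite lee_fin normal_pdf_ge0.
- apply/measurable_EFinP; exact: measurable_normal_pdf.
Qed.
End mgf.

Section indep.
Context (R : realType) (dT : measure_display) (T : measurableType dT)
  (P : probability T R) (d : nat) (X : 'I_d -> T -> R)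
  (mX : forall i, measurable_fun setT (X i))
  (ind : mutually_independent P X).

Lemma prod_indic (B : 'I_d -> set R) w :
  \prod_(i < d) \1_(B i) (X i w) =
  \1_(\bigcap_(i in [set: 'I_d]) (X i @^-1` B i)) w :> R.
Proof.
have [wB|wB] := boolP (w \in \bigcap_(i in [set: 'I_d]) (X i @^-1` B i)).
  rewrite indicE wB /=; apply: big1 => i _.
  rewrite indicE mem_set//.
  by move: wB; rewrite inE => /(_ i Logic.I).
rewrite indicE (negbTE wB).
move: wB; rewrite notin_setE => wB.
have : (~` (\bigcap_(i in [set: 'I_d]) (X i @^-1` B i))) w by [].
rewrite setC_bigcap => -[i _ Hi].
rewrite (bigD1 i)//= indicE memNset// mul0r//.
Qed.

Lemma mpre i (S : set R) : measurable S -> measurable (X i @^-1` S).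
Proof. by move=> mS; rewrite -(setTI (_ @^-1` _)); exact: (mX i). Qed.

Lemma int_indic_comp i (S : set R) : measurable S ->
  (\int[P]_w (\1_S (X i w))%:E = P (X i @^-1` S))%E.
Proof.
move=> mS.
transitivity (\int[P]_w (\1_(X i @^-1` S) w)%:E)%E.
  by apply: eq_integral => w _; rewrite !indicE.
by rewrite integral_indic ?setIT//; exact: mpre.
Qed.

Definition hk (k : nat) (f : 'I_d -> R -> R) (B : 'I_d -> set R) (i : 'I_d) : R -> R :=
  if (i < k)%N then f i else \1_(B i).

Section hk_facts.
Variables (f : 'I_d -> R -> R) (B : 'I_d -> set R).
Hypotheses (mB : forall i, measurable (B i))
  (mf : forall i, measurable_fun setT (f i)) (f0 : forall i x, 0 <= f i x)
  (fint : forall i, (\int[P]_w (f i (X i w))%:E < +oo)%E).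

Lemma mhk k i : measurable_fun setT (hk k f B i).
Proof. by rewrite /hk; case: ifP => _; [exact: mf|exact: measurable_indic]. Qed.

Lemma hk0 k i x : 0 <= hk k f B i x.
Proof. by rewrite /hk; case: ifP => _. Qed.

Lemma hkfin k i : (\int[P]_w (hk k f B i (X i w))%:E)%E \is a fin_num.
Proof.
rewrite /hk; case: ifP => _.
  by rewrite ge0_fin_numE ?fint// integral_ge0// => w _; rewrite lee_fin.
by rewrite int_indic_comp// fin_num_measure//; exact: mpre.
Qed.

Lemma hkfine k i : (fine (\int[P]_w (hk k f B i (X i w))%:E))%:E =
   (\int[P]_w (hk k f B i (X i w))%:E)%E.
Proof. by rewrite fineK// hkfin. Qed.

Lemma hkfine0 k i : 0 <= fine (\int[P]_w (hk k f B i (X i w))%:E).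
Proof. by rewrite fine_ge0// integral_ge0// => w _; rewrite lee_fin hk0. Qed.

End hk_facts.

Lemma indep_base (f : 'I_d -> R -> R) (B : 'I_d -> set R) : (forall i, measurable (B i)) ->
  (\int[P]_w (\prod_i hk 0 f B i (X i w))%:E =
   (\prod_i fine (\int[P]_w (hk 0 f B i (X i w))%:E))%:E)%E.
Proof.
move=> mB.
have mI : measurable (\bigcap_(i in [set: 'I_d]) (X i @^-1` B i)).
  apply: fin_bigcap_measurable; first exact: finite_finset.
  by move=> i _; exact: mpre.
rewrite (eq_integral (fun w => (\1_(\bigcap_(i in [set: 'I_d]) (X i @^-1` B i)) w)%:E)); last first.
  by move=> w _; rewrite -prod_indic.
rewrite integral_indic// setIT.
transitivity (\prod_(i < d) P (X i @^-1` B i))%E; first exact: ind B mB.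
rewrite -prodEFin; apply: eq_bigr => i _.
by rewrite /hk ltn0 fineK int_indic_comp// fin_num_measure//; exact: mpre.
Qed.

Lemma indep_step k (kd : (k < d)%N) (f : 'I_d -> R -> R) (B : 'I_d -> set R) (mB : forall i, measurable (B i))
  (mf : forall i, measurable_fun setT (f i)) (f0 : forall i x, 0 <= f i x)
  (fint : forall i, (\int[P]_w (f i (X i w))%:E < +oo)%E) :
  (forall B' : 'I_d -> set R, (forall i, measurable (B' i)) ->
    (\int[P]_w (\prod_i hk k f B' i (X i w))%:E =
     (\prod_i fine (\int[P]_w (hk k f B' i (X i w))%:E))%:E)%E) ->
  (\int[P]_w (\prod_i hk k.+1 f B i (X i w))%:E =
   (\prod_i fine (\int[P]_w (hk k.+1 f B i (X i w))%:E))%:E)%E.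
Proof.
move=> IH.
pose j := Ordinal kd.
pose G1 w := \prod_(i | i != j) hk k.+1 f B i (X i w).
pose c := \prod_(i | i != j) fine (\int[P]_w (hk k.+1 f B i (X i w))%:E).
have hkj : hk k.+1 f B j = f j by rewrite /hk /= ltnSn.
have hkne i : i != j -> hk k.+1 f B i = hk k f B i.
  move=> ne; rewrite /hk ltnS leq_eqVlt.
  have -> : (nat_of_ord i == k) = false.
    apply/negbTE; apply: contra ne => /eqP h; apply/eqP/val_inj => /=.
    exact: h.
  by [].
have mG1 : measurable_fun setT G1.
  have -> : G1 = fun w => \prod_(i <- index_enum 'I_d)
      (if i != j then hk k.+1 f B i (X i w) else 1).
    by apply/funext => w; rewrite /G1 big_mkcond.
  apply: measurable_prod => i _; case: (i != j); last exact: measurable_cst.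
  apply: measurableT_comp; [exact: mhk|exact: mX].
have G10 w : 0 <= G1 w by apply: prodr_ge0 => i _; exact: hk0.
have c0 : 0 <= c by apply: prodr_ge0 => i _; exact: hkfine0.
have key S : measurable S -> (\int[P]_w (\1_S (X j w) * G1 w)%:E =
    \int[P]_w (\1_S (X j w) * (fun=> c) w)%:E)%E.
  move=> mS.
  pose B' := fun i => if i == j then S else B i.
  have mB' i : measurable (B' i) by rewrite /B'; case: ifP.
  have hB'j : hk k f B' j = \1_S by rewrite /hk /= ltnn /B' eqxx.
  have hB'ne i : i != j -> hk k f B' i = hk k.+1 f B i.
    by move=> ne; rewrite hkne// /hk /B' (negbTE ne).
  have := IH B' mB'.
  rewrite (eq_integral (fun w => (\1_S (X j w) * G1 w)%:E)); last first.
    move=> w _; rewrite (bigD1 j)//= hB'j; congr ((_ * _)%:E).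
    by apply: eq_bigr => i ne; rewrite hB'ne.
  move=> ->.
  rewrite (bigD1 j)//= hB'j.
  under [RHS]eq_integral do rewrite mulrC EFinM.
  rewrite ge0_integralZl_EFin//; last first.
    by apply/measurable_EFinP; apply: measurableT_comp => //; exact: measurable_indic.
  have fS : (\int[P]_x (\1_S (X j x))%:E)%E \is a fin_num.
    by rewrite int_indic_comp// fin_num_measure//; exact: mpre.
  rewrite -[in RHS](fineK fS) -EFinM mulrC; congr (EFin (_ * _)).
  by apply: eq_bigr => i ne; rewrite hB'ne.
rewrite (eq_integral (fun w => (f j (X j w) * G1 w)%:E)); last first.
  by move=> w _; rewrite (bigD1 j)//= hkj.
rewrite (@gen_eq R _ T P (X j) G1 (mX j) mG1 G10 _ T P (X j) (fun=> c) (mX j)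
  (measurable_cst c) (fun=> c0) key (f j) (mf j) (f0 j)).
rewrite (bigD1 j)//= hkj.
under eq_integral do rewrite mulrC EFinM.
rewrite ge0_integralZl_EFin//; try (by move=> w _; rewrite lee_fin);
  try (by apply/measurable_EFinP; apply: measurableT_comp).
have fS : (\int[P]_x (f j (X j x))%:E)%E \is a fin_num.
  by rewrite ge0_fin_numE ?fint// integral_ge0// => w _; rewrite lee_fin.
by rewrite -[in LHS](fineK fS) -EFinM mulrC.
Qed.

Lemma indep_prod (f : 'I_d -> R -> R) (mf : forall i, measurable_fun setT (f i))
  (f0 : forall i x, 0 <= f i x)
  (fint : forall i, (\int[P]_w (f i (X i w))%:E < +oo)%E) :
  (\int[P]_w (\prod_i f i (X i w))%:E =
   (\prod_i fine (\int[P]_w (f i (X i w))%:E))%:E)%E.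
Proof.
have H k : (k <= d)%N -> forall B, (forall i, measurable (B i)) ->
    (\int[P]_w (\prod_i hk k f B i (X i w))%:E =
     (\prod_i fine (\int[P]_w (hk k f B i (X i w))%:E))%:E)%E.
  elim: k => [|k IHk] kd B mB; first exact: indep_base.
  apply: indep_step => //.
  by move=> B' mB'; apply: IHk => //; exact: ltnW.
have := H d (leqnn d) (fun=> set0) (fun=> measurable0).
have E i : hk d f (fun=> set0) i = f i by rewrite /hk ltn_ord.
under eq_integral do under eq_bigr do rewrite E.
by under eq_bigr do rewrite E.
Qed.

End indep.


Section core.
Context (R : realType) (dT : measure_display) (T : measurableType dT)
  (P : probability T R) (d : nat) (X : 'I_d -> T -> R)
  (theta : 'rV[R]_d) (sigma : R).
Hypothesis sigma0 : 0 < sigma.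
Hypothesis gX : gaussian_vector P X theta sigma.

Let mX : forall i, measurable_fun setT (X i).
Proof. by case: gX. Qed.

Let ind : mutually_independent P X.
Proof. by case: gX => _ []. Qed.

Let law i (A : set R) : measurable A -> P (X i @^-1` A) = normal_prob (theta 0 i) sigma A.
Proof. by case: gX => _ [] _ /(_ i A). Qed.

Definition Ssum (a c : 'I_d -> R) (w : T) : R := \sum_(i < d) (X i w - c i) * a i.

Lemma mSsum a c : measurable_fun setT (Ssum a c).
Proof.
rewrite /Ssum; apply: measurable_sum => i.
apply: measurable_funM => //; apply: measurable_funB => //.
Qed.

Lemma mSle a c : measurable [set w | Ssum a c w <= 0].
Proof.
have := mSsum a c measurableT _ (measurable_itv `]-oo, 0]).
by rewrite setTI preimage_itvNyc.
Qed.

Lemma int_law i (phi : R -> R) : measurable_fun setT phi -> (forall x, 0 <= phi x) ->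
  (\int[P]_w (phi (X i w))%:E =
   \int[lebesgue_measure]_x (phi x * normal_pdf (theta 0 i) sigma x)%:E)%E.
Proof.
move=> mphi phi0.
transitivity (\int[P]_w (phi (X i w) * (fun=> 1) w)%:E)%E.
  by apply: eq_integral => w _; rewrite mulr1.
have H : forall S : set R, measurable S ->
  (\int[P]_w (\1_S (X i w) * (fun=> 1) w)%:E =
   \int[lebesgue_measure]_x (\1_S (id x) * normal_pdf (theta 0 i) sigma x)%:E)%E.
  move=> S mS.
  transitivity (P (X i @^-1` S)).
    rewrite -(@int_indic_comp R _ T P d X mX i S mS).
    by apply: eq_integral => w _; rewrite mulr1.
  rewrite law// /normal_prob integral_mkcond epatch_indic.
  by apply: eq_integral => x _; rewrite /= -EFinM mulrC.
exact (@gen_eq R _ T P (X i) (fun=> 1) (mX i) (measurable_cst _) (fun=> ler01)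
  _ _ lebesgue_measure id (normal_pdf (theta 0 i) sigma) ltac:(exact: measurable_id)
  (measurable_normal_pdf _ _) (normal_pdf_ge0 _ _) H phi mphi phi0).
Qed.

Lemma chernoff_core (a c : 'I_d -> R) (lam : R) : 0 <= lam ->
  (P [set w | (Ssum a c w <= 0)%R] <=
   (expR (- lam * \sum_(i < d) (theta 0 i - c i) * a i
          + lam ^+ 2 * sigma ^+ 2 * (\sum_(i < d) a i ^+ 2) / 2))%:E)%E.
Proof.
move=> lam0.
pose f i x := expR (- lam * ((x - c i) * a i)).
have mf i : measurable_fun setT (f i).
  apply: measurableT_comp; first exact: measurable_expR.
  apply: measurable_funM => //; apply: measurable_funM => //.
  exact: measurable_funB.
have f0 i x : 0 <= f i x by exact: expR_ge0.
have s0 : sigma != 0 by rewrite gt_eqF.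
have intf i : (\int[P]_w (f i (X i w))%:E =
   (expR ((- lam * a i) * (theta 0 i - c i) + (- lam * a i) ^+ 2 * sigma ^+ 2 / 2))%:E)%E.
  rewrite int_law//.
  transitivity (\int[lebesgue_measure]_x
     (expR ((- lam * a i) * (x - c i)) * normal_pdf (theta 0 i) sigma x)%:E)%E.
    apply: eq_integral => x _; rewrite /f.
    by congr (EFin (expR _ * _)); ring.
  exact: gauss_mgf.
have fint i : (\int[P]_w (f i (X i w))%:E < +oo)%E by rewrite intf ltry.
have -> : P [set w | (Ssum a c w <= 0)%R] =
    (\int[P]_w (\1_[set w | (Ssum a c w <= 0)%R] w)%:E)%E.
  by rewrite integral_indic ?setIT//; exact: mSle.
apply: (@le_trans _ _ (\int[P]_w (\prod_i f i (X i w))%:E)%E).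
  apply: ge0_le_integral => //.
  - apply/measurable_EFinP; apply: measurable_indic; exact: mSle.
  - apply/measurable_EFinP; apply: measurable_prod => i _.
    exact: measurableT_comp.
  - move=> w _; rewrite lee_fin.
    have -> : \prod_i f i (X i w) = expR (- lam * Ssum a c w).
      by rewrite /Ssum mulr_sumr expR_sum.
    rewrite indicE; case: (boolP (w \in _)) => [|_]; last exact: expR_ge0.
    rewrite inE /= => Hw.
    apply: le_trans (expR_ge1Dx _); rewrite lerDl.
    by rewrite mulNr oppr_ge0 mulr_ge0_le0.
rewrite (@indep_prod R _ T P d X mX ind f mf f0 fint) lee_fin.
under eq_bigr do rewrite intf /=.
rewrite -expR_sum ler_expR le_eqVlt; apply/orP; left; apply/eqP.
rewrite big_split /=; congr (_ + _).
  by rewrite mulr_sumr; apply: eq_bigr => i _; ring.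
by rewrite mulr_sumr mulr_suml; apply: eq_bigr => i _; ring.
Qed.

End core.
Section geom.
Context (R : realType).

Lemma final_ineq (s2 L N E1 E2 m A : R) : 0 < s2 -> 1/2 <= L ->
  512 * s2 * L <= N -> E1 <= s2 -> E2 <= s2 ->
  N / 2 - E1 - E2 <= 4 * m -> 4 * A <= 2 * N + 4 * E1 + 4 * E2 ->
  - (1 / (16 * s2)) * m + (1 / (16 * s2)) ^+ 2 * s2 * A / 2 <= - L.
Proof.
move=> s0 L2 HN H1 H2 Hm HA.
have -> : - (1 / (16 * s2)) * m + (1 / (16 * s2)) ^+ 2 * s2 * A / 2 =
   (- 32 * m + A) / (512 * s2).
  by field; rewrite gt_eqF.
rewrite ler_pdivrMr; last by rewrite mulr_gt0.
have : 18 * s2 <= 1280 * s2 * L by nra.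
lra.
Qed.

Lemma geom (d : nat) (p q u v : 'I_d -> R) (s2 L : R) : 0 < s2 -> 1/2 <= L ->
  512 * s2 * L <= \sum_i (p i - q i) ^+ 2 ->
  \sum_i (u i - p i) ^+ 2 <= s2 -> \sum_i (v i - q i) ^+ 2 <= s2 ->
  - (1 / (16 * s2)) * (\sum_i (p i - 1/2 * (u i + v i)) * (u i - 1/2 * (u i + v i)))
    + (1 / (16 * s2)) ^+ 2 * s2 * (\sum_i (u i - 1/2 * (u i + v i)) ^+ 2) / 2 <= - L
  /\
  - (1 / (16 * s2)) * (\sum_i (q i - 1/2 * (u i + v i)) * - (u i - 1/2 * (u i + v i)))
    + (1 / (16 * s2)) ^+ 2 * s2 * (\sum_i (- (u i - 1/2 * (u i + v i))) ^+ 2) / 2 <= - L.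
Proof.
move=> s0 L2 HN H1 H2.
set N := \sum_i (p i - q i) ^+ 2.
set E1 := \sum_i (u i - p i) ^+ 2.
set E2 := \sum_i (v i - q i) ^+ 2.
have EL : N / 2 - E1 - E2 = \sum_i ((p i - q i) ^+ 2 / 2 - (u i - p i) ^+ 2 - (v i - q i) ^+ 2).
  by rewrite !sumrB mulr_suml.
have ER : 2 * N + 4 * E1 + 4 * E2 =
    \sum_i (2 * (p i - q i) ^+ 2 + 4 * (u i - p i) ^+ 2 + 4 * (v i - q i) ^+ 2).
  by rewrite !big_split /= !mulr_sumr.
have HA : 4 * (\sum_i (u i - 1/2 * (u i + v i)) ^+ 2) <= 2 * N + 4 * E1 + 4 * E2.
  rewrite ER mulr_sumr; apply: ler_sum => i _.
  have := sqr_ge0 (p i - q i - (u i - p i) + (v i - q i)).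
  have := sqr_ge0 ((u i - p i) + (v i - q i)).
  nra.
split.
  apply: (final_ineq _ _ _ _ _ _ _ s0 L2 HN H1 H2) => //.
  rewrite EL mulr_sumr; apply: ler_sum => i _.
  have := sqr_ge0 ((p i - q i) - 2 * (v i - q i)).
  nra.
apply: (final_ineq _ _ _ _ _ _ _ s0 L2 HN H1 H2).
  rewrite EL mulr_sumr; apply: ler_sum => i _.
  have := sqr_ge0 ((p i - q i) + 2 * (u i - p i)).
  nra.
by under eq_bigr do rewrite sqrrN.
Qed.
End geom.

Lemma case_bound (R : realType) (dT : measure_display) (T : measurableType dT)
  (P : probability T R) (d : nat) (X : 'I_d -> T -> R) (theta : 'rV[R]_d)
  (sigma : R) (s0 : 0 < sigma) (gX : gaussian_vector P X theta sigma)
  (a c : 'I_d -> R) (delta : R) (A : set T) :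
  A = ~` [set w | Ssum R dT T d X a c w <= 0] ->
  expR (- (1 / (16 * sigma ^+ 2)) * (\sum_(i < d) (theta 0 i - c i) * a i)
     + (1 / (16 * sigma ^+ 2)) ^+ 2 * sigma ^+ 2 * (\sum_(i < d) a i ^+ 2) / 2)
    <= delta ->
  ((1 - delta)%:E <= P A)%E.
Proof.
move=> -> Hd.
have mA := @mSle R dT T P d X theta sigma gX a c.
rewrite probability_setC//.
have HP := @chernoff_core R dT T P d X theta sigma s0 gX a c (1 / (16 * sigma ^+ 2))
  ltac:(by rewrite divr_ge0// mulr_ge0// sqr_ge0).
have fA := fin_num_measure P _ mA.
move: HP; rewrite -(fineK fA) lee_fin => HP.
rewrite -EFinB lee_fin.
have := le_trans HP Hd.
lra.
Qed.

Theorem mainTheorem16 (R : realType) :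
  exists C : R,
  forall (d : nat) (sigma delta : R) (theta1 theta2 hth1 hth2 : 'rV[R]_d),
    0 < sigma ->
    0 < delta -> delta < 1 / 2 ->
    (norm2 (theta1 - theta2)) ^+ 2 >= C * sigma ^+ 2 * ln (delta^-1) ->
    norm2 (hth1 - theta1) <= sigma ->
    norm2 (hth2 - theta2) <= sigma ->
    let hc := (1 / 2 : R) *: (hth1 + hth2) in
    forall (dT : measure_display) (T : measurableType dT) (P : probability T R)
           (X : 'I_d -> T -> R),
      (gaussian_vector P X theta1 sigma ->
         (P [set w | (0 < dotv (rvec X w - hc) (hth1 - hc))%R] >= (1 - delta)%:E)%E) /\
      (gaussian_vector P X theta2 sigma ->
         (P [set w | (dotv (rvec X w - hc) (hth1 - hc) < 0)%R] >= (1 - delta)%:E)%E).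
Proof.
exists 512 => d sigma delta theta1 theta2 hth1 hth2 s0 dl0 dl2 HC Hn1 Hn2 hc dT T P X.
set L := ln (delta^-1).
have dpos : delta^-1 \is Num.pos by rewrite posrE invr_gt0.
have eL : expR (- L) = delta by rewrite expRN lnK// invrK.
have L2 : 1/2 <= L.
  have := expR_ge1Dx (- L); rewrite eL; lra.
have dotE (u v : 'rV[R]_d) : norm2 (u - v) ^+ 2 = \sum_i (u 0 i - v 0 i) ^+ 2.
  rewrite /norm2 sqr_sqrtr; last by rewrite /dotv; apply: sumr_ge0 => i _; rewrite -expr2 sqr_ge0.
  by rewrite /dotv; apply: eq_bigr => i _; rewrite expr2 !mxE.
have HN : 512 * sigma ^+ 2 * L <= \sum_i (theta1 0 i - theta2 0 i) ^+ 2.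
  by rewrite -dotE.
have H1 : \sum_i (hth1 0 i - theta1 0 i) ^+ 2 <= sigma ^+ 2.
  rewrite -dotE; have n0 : 0 <= norm2 (hth1 - theta1) by exact: sqrtr_ge0.
  nra.
have H2 : \sum_i (hth2 0 i - theta2 0 i) ^+ 2 <= sigma ^+ 2.
  rewrite -dotE; have n0 : 0 <= norm2 (hth2 - theta2) by exact: sqrtr_ge0.
  nra.
have s2 : 0 < sigma ^+ 2 by rewrite exprn_gt0.
have [G1 G2] := @geom R d (fun i => theta1 0 i) (fun i => theta2 0 i) (fun i => hth1 0 i)
  (fun i => hth2 0 i) _ _ s2 L2 HN H1 H2.
have hcE i : hc 0 i = 1/2 * (hth1 0 i + hth2 0 i) by rewrite /hc !mxE.
pose c i := 1/2 * (hth1 0 i + hth2 0 i).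
pose a i := hth1 0 i - c i.
have dotS w : dotv (rvec X w - hc) (hth1 - hc) = Ssum R dT T d X a c w.
  rewrite /dotv /Ssum; apply: eq_bigr => i _.
  by rewrite !mxE.
split => gX.
  apply: (@case_bound R dT T P d X theta1 sigma s0 gX a c).
    apply/funext => w /=; apply/propext; rewrite dotS /setC /=.
    by rewrite ltNge; split => [/negP|/negP].
  by rewrite -eL ler_expR.
apply: (@case_bound R dT T P d X theta2 sigma s0 gX (fun i => - a i) c).
  apply/funext => w /=; apply/propext; rewrite dotS /setC /=.
  have -> : Ssum R dT T d X (fun i => - a i) c w = - Ssum R dT T d X a c w.
    by rewrite /Ssum -sumrN; apply: eq_bigr => i _; rewrite mulrN.
  by rewrite oppr_le0 ltNge; split => [/negP|/negP].
by rewrite -eL ler_expR.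
Qed.
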